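(* Let $\lambda=\langle\lambda_j\rangle_{j=1}^\infty$ with $0<\lambda_j<\frac12$ for all $j$ and $\sum_{j=1}^\infty\lambda_j<1$. Let $\{u_j\}_{j\ge1}$ be unit vectors in a separable Hilbert space $H$ such that $\sum_{j=2}^\infty u_j\otimes u_j$ converges in the strong operator topology, and let $$B=\Big(1-\sum_{j=1}^\infty\lambda_j\Big)u_1\otimes u_1+\sum_{j=2}^\infty u_j\otimes u_j.$$ Then $\langle 1-\lambda_j\rangle_{j=1}^\infty\in\operatorname{Adm}(B)$.
   Context: For vectors $x,y$, $x\otimes y$ denotes the rank-one operator $z\mapsto(z,y)x$. $\operatorname{Adm}(B)$ is the set of sequences $\xi\in\ell^\infty_+$ such that $B=\sum_j\xi_jP_j$ for some rank-one projections $P_j$ (series converging in the strong operator topology if infinite). *)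

(* Defs.v *)
From Stdlib Require Import Reals.
Open Scope R_scope.

Record C := mkC { Re : R; Im : R }.
Definition C0 : C := mkC 0 0.
Definition C1 : C := mkC 1 0.
Definition RtoC (r : R) : C := mkC r 0.
Definition Cadd (a b : C) : C := mkC (Re a + Re b) (Im a + Im b).
Definition Cmul (a b : C) : C :=
  mkC (Re a * Re b - Im a * Im b) (Re a * Im b + Im a * Re b).
Definition Cconj (a : C) : C := mkC (Re a) (- Im a).

(* ---------- complex Hilbert spaces (separable) ----------
   inner product linear in the first argument, conjugate-linear in the second,
   so that (x ⊗ y) z = (z,y) x. *)
Record SepHilbert := {
  hcar :> Type;
  hzero : hcar;
  hadd : hcar -> hcar -> hcar;
  hopp : hcar -> hcar;
  hscal : C -> hcar -> hcar;
  inner : hcar -> hcar -> C;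
  hadd_assoc : forall x y z, hadd x (hadd y z) = hadd (hadd x y) z;
  hadd_comm : forall x y, hadd x y = hadd y x;
  hadd_0 : forall x, hadd x hzero = x;
  hadd_opp : forall x, hadd x (hopp x) = hzero;
  hscal_1 : forall x, hscal C1 x = x;
  hscal_assoc : forall a b x, hscal a (hscal b x) = hscal (Cmul a b) x;
  hscal_distr_v : forall a x y, hscal a (hadd x y) = hadd (hscal a x) (hscal a y);
  hscal_distr_s : forall a b x, hscal (Cadd a b) x = hadd (hscal a x) (hscal b x);
  inner_add_l : forall x y z, inner (hadd x y) z = Cadd (inner x z) (inner y z);
  inner_scal_l : forall a x z, inner (hscal a x) z = Cmul a (inner x z);
  inner_conj : forall x y, inner y x = Cconj (inner x y);
  inner_pos : forall x, 0 <= Re (inner x x);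
  inner_def : forall x, inner x x = C0 -> x = hzero;
  hcomplete : forall s : nat -> hcar,
    (forall eps, eps > 0 -> exists N, forall n m, (n >= N)%nat -> (m >= N)%nat ->
        sqrt (Re (inner (hadd (s n) (hopp (s m))) (hadd (s n) (hopp (s m))))) < eps) ->
    exists l, forall eps, eps > 0 -> exists N, forall n, (n >= N)%nat ->
        sqrt (Re (inner (hadd (s n) (hopp l)) (hadd (s n) (hopp l)))) < eps;
  hseparable : exists d : nat -> hcar, forall x eps, eps > 0 -> exists n,
        sqrt (Re (inner (hadd x (hopp (d n))) (hadd x (hopp (d n))))) < eps
}.

Section Ops.
Variable H : SepHilbert.

Definition hnorm (x : H) : R := sqrt (Re (inner H x x)).
Definition hsub (x y : H) : H := hadd H x (hopp H y).

Definition rank1 (x y : H) : H -> H := fun z => hscal H (inner H z y) x.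

Definition vconv (s : nat -> H) (l : H) : Prop :=
  forall eps, eps > 0 -> exists N, forall n, (n >= N)%nat -> hnorm (hsub (s n) l) < eps.

Fixpoint vsum (f : nat -> H) (n : nat) : H :=
  match n with O => hzero H | S k => hadd H (vsum f k) (f k) end.

Definition sot_sum (T : nat -> (H -> H)) (A : H -> H) : Prop :=
  forall x, vconv (fun n => vsum (fun j => T j x) n) (A x).

Definition rank1_proj (P : H -> H) : Prop :=
  (forall x y, inner H (P x) y = inner H x (P y)) /\
  (forall x, P (P x) = P x) /\
  exists v : H, v <> hzero H /\ P v = v /\ (forall x, exists c : C, P x = hscal H c v).

Definition Adm (B : H -> H) (xi : nat -> R) : Prop :=
  (forall j, 0 <= xi j) /\ (exists M, forall j, xi j <= M) /\
  exists P : nat -> (H -> H), (forall j, rank1_proj (P j)) /\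
    sot_sum (fun j x => hscal H (RtoC (xi j)) (P j x)) B.

End Ops.

(* Main.v *)
Require Import Defs.
From Stdlib Require Import Reals Lra Psatz.
Open Scope R_scope.

Lemma Ceq (a b : Defs.C) : Re a = Re b -> Im a = Im b -> a = b.
Proof. destruct a, b; simpl; intros; subst; reflexivity. Qed.

Arguments hadd_assoc {s0} x y z.
Arguments hadd_comm {s0} x y.
Arguments hadd_0 {s0} x.
Arguments hadd_opp {s0} x.
Arguments hscal_1 {s0} x.
Arguments hscal_assoc {s0} a b x.
Arguments hscal_distr_v {s0} a x y.
Arguments hscal_distr_s {s0} a b x.
Arguments inner_add_l {s0} x y z.
Arguments inner_scal_l {s0} a x z.
Arguments inner_conj {s0} x y.
Arguments inner_pos {s0} x.
Arguments inner_def {s0} x.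

Ltac Cext := apply Ceq; simpl.

Notation "x +v y" := (hadd _ x y) (at level 50, left associativity).
Notation "c *v x" := (hscal _ c x) (at level 40, no associativity).

Lemma add_self_zero {H : SepHilbert} (z : H) : z = z +v z -> z = hzero H.
Proof.
  intros E.
  assert (E2 : z +v hopp H z = (z +v z) +v hopp H z) by (rewrite <- E; reflexivity).
  rewrite <- hadd_assoc, !hadd_opp, hadd_0 in E2. symmetry; exact E2.
Qed.

Lemma hscal_0 {H : SepHilbert} (x : H) : C0 *v x = hzero H.
Proof.
  apply add_self_zero. rewrite <- hscal_distr_s. f_equal. Cext; ring.
Qed.

Lemma hadd_0_l {H : SepHilbert} (x : H) : hzero H +v x = x.
Proof. rewrite hadd_comm; apply hadd_0. Qed.

Lemma opp_unique {H : SepHilbert} (x y : H) : x +v y = hzero H -> y = hopp H x.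
Proof.
  intros E.
  rewrite <- (hadd_0 y), <- (hadd_opp x), hadd_assoc, (hadd_comm y), E, hadd_0_l.
  reflexivity.
Qed.

Lemma hopp_scal {H : SepHilbert} (x : H) : hopp H x = RtoC (-1) *v x.
Proof.
  symmetry. apply opp_unique.
  rewrite <- (hscal_1 x) at 1. rewrite <- hscal_distr_s, <- (hscal_0 x). f_equal.
  Cext; ring.
Qed.

Lemma inner_add_r {H : SepHilbert} (z x y : H) :
  inner H z (x +v y) = Cadd (inner H z x) (inner H z y).
Proof.
  rewrite (inner_conj (x +v y) z), inner_add_l, (inner_conj x z), (inner_conj y z).
  Cext; ring.
Qed.

Lemma inner_scal_r {H : SepHilbert} (z x : H) a :
  inner H z (a *v x) = Cmul (Cconj a) (inner H z x).
Proof.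
  rewrite (inner_conj (a *v x) z), inner_scal_l, (inner_conj x z).
  destruct a, (inner H x z); Cext; ring.
Qed.

Lemma inner_self_Im {H : SepHilbert} (x : H) : Im (inner H x x) = 0.
Proof.
  pose proof (f_equal Im (inner_conj x x)) as E. simpl in E. lra.
Qed.

Definition N {H : SepHilbert} (x : H) : R := Re (inner H x x).

Lemma N_ge0 {H : SepHilbert} (x : H) : 0 <= N x.
Proof. apply inner_pos. Qed.

Lemma Re_inner_sym {H : SepHilbert} (x y : H) : Re (inner H y x) = Re (inner H x y).
Proof. rewrite (inner_conj x y). reflexivity. Qed.

Lemma Ncomb {H : SepHilbert} (v w : H) p q :
  N (RtoC p *v v +v RtoC q *v w) = p*p*N v + q*q*N w + 2*p*q*Re (inner H v w).
Proof.
  unfold N. rewrite inner_add_l, !inner_add_r, !inner_scal_l, !inner_scal_r, ?inner_scal_l.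
  pose proof (Re_inner_sym v w) as E.
  pose proof (inner_self_Im v). pose proof (inner_self_Im w).
  destruct (inner H v v), (inner H w w), (inner H v w), (inner H w v); simpl in *.
  subst. nra.
Qed.

Lemma Nscal {H : SepHilbert} (c : Defs.C) (z : H) :
  N (c *v z) = (Re c * Re c + Im c * Im c) * N z.
Proof.
  unfold N. rewrite inner_scal_l, inner_scal_r.
  pose proof (inner_self_Im z).
  destruct c, (inner H z z); simpl in *; subst; ring.
Qed.

Lemma scal_RtoC1 {H : SepHilbert} (w : H) : RtoC 1 *v w = w.
Proof. change (RtoC 1) with Defs.C1. apply hscal_1. Qed.

Lemma CS {H : SepHilbert} (v w : H) : Re (inner H v w) * Re (inner H v w) <= N v * N w.
Proof.
  set (r := Re (inner H v w)).
  assert (forall t, 0 <= N v + 2*t*r + t*t*N w).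
  { intro t. pose proof (N_ge0 (RtoC 1 *v v +v RtoC t *v w)) as G.
    rewrite Ncomb in G. unfold r. nra. }
  pose proof (N_ge0 v); pose proof (N_ge0 w).
  destruct (Req_dec (N w) 0) as [E|E].
  - destruct (Req_dec r 0) as [E2|E2].
    + rewrite E2, E. lra.
    + specialize (H0 (-(N v + 1)/(2*r))). rewrite E in H0.
      replace (2 * (- (N v + 1) / (2 * r)) * r) with (-(N v + 1)) in H0 by (field; exact E2).
      lra.
  - specialize (H0 (- r / N w)).
    assert (0 < N w) by lra.
    apply Rmult_le_reg_r with (/ N w). apply Rinv_0_lt_compat; lra.
    replace (N v * N w * / N w) with (N v) by (field; lra).
    replace (r*r*/N w) with (-(2 * (- r / N w) * r + - r / N w * (- r / N w) * N w)) by (field; lra).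
    lra.
Qed.

Lemma Nadd {H : SepHilbert} (v w : H) : N (v +v w) = N v + N w + 2 * Re (inner H v w).
Proof.
  pose proof (Ncomb v w 1 1) as E. rewrite !scal_RtoC1 in E. rewrite E. ring.
Qed.

Lemma sqrt_CS {H : SepHilbert} (v w : H) : Rabs (Re (inner H v w)) <= sqrt (N v) * sqrt (N w).
Proof.
  rewrite <- sqrt_mult_alt by apply N_ge0.
  rewrite <- sqrt_Rsqr_abs. apply sqrt_le_1_alt. unfold Rsqr. apply CS.
Qed.

Lemma tri {H : SepHilbert} (v w : H) : hnorm H (v +v w) <= hnorm H v + hnorm H w.
Proof.
  unfold hnorm. fold (N (v +v w)) (N v) (N w).
  pose proof (sqrt_CS v w). pose proof (Rle_abs (Re (inner H v w))).
  pose proof (sqrt_pos (N v)); pose proof (sqrt_pos (N w)).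
  rewrite <- (sqrt_square (sqrt (N v) + sqrt (N w))) by lra.
  apply sqrt_le_1_alt. rewrite Nadd.
  replace ((sqrt (N v) + sqrt (N w)) * (sqrt (N v) + sqrt (N w))) with
    (sqrt (N v) * sqrt (N v) + sqrt (N w) * sqrt (N w) + 2 * (sqrt (N v) * sqrt (N w))) by ring.
  rewrite !sqrt_sqrt by apply N_ge0. lra.
Qed.

Lemma hnorm_scal {H : SepHilbert} (c : Defs.C) (z : H) :
  hnorm H (c *v z) = sqrt ((Re c * Re c + Im c * Im c) * N z).
Proof. unfold hnorm. fold (N (c *v z)). rewrite Nscal. reflexivity. Qed.

Lemma hnorm_opp {H : SepHilbert} (z : H) : hnorm H (hopp H z) = hnorm H z.
Proof. rewrite hopp_scal, hnorm_scal. simpl. unfold hnorm. f_equal. fold (N z). ring. Qed.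

Lemma Re_inner_sub {H : SepHilbert} (a b x : H) :
  Re (inner H (hsub H a b) x) = Re (inner H a x) - Re (inner H b x).
Proof.
  unfold hsub. rewrite inner_add_l, hopp_scal, inner_scal_l. simpl. ring.
Qed.

Lemma hadd_swap {H : SepHilbert} (a b c : H) : a +v (b +v c) = b +v (a +v c).
Proof. rewrite !hadd_assoc, (hadd_comm a b). reflexivity. Qed.

Lemma hadd_cancel_r {H : SepHilbert} (a b c : H) : a +v c = b +v c -> a = b.
Proof.
  intro E. rewrite <- (hadd_0 a), <- (hadd_0 b), <- (hadd_opp c), !hadd_assoc, E. reflexivity.
Qed.

Lemma hopp_add {H : SepHilbert} (a b : H) : hopp H (a +v b) = hopp H a +v hopp H b.
Proof. rewrite !hopp_scal, hscal_distr_v. reflexivity. Qed.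

Lemma S_solve {H : SepHilbert} (S r X : H) : S +v r = X -> S = X +v hopp H r.
Proof. intro E. rewrite <- E, <- hadd_assoc, hadd_opp, hadd_0. reflexivity. Qed.

Lemma rearr {H : SepHilbert} (S r r0 V B : H) :
  S +v r = r0 +v V -> hsub H S (r0 +v B) = hsub H V B +v hopp H r.
Proof.
  intro E. apply S_solve in E. subst S. unfold hsub. rewrite hopp_add.
  rewrite <- !hadd_assoc. rewrite hadd_swap. f_equal.
  rewrite hadd_swap. rewrite (hadd_assoc r0). rewrite hadd_opp, hadd_0_l.
  apply hadd_comm.
Qed.

Fixpoint psum (f : nat -> R) (n : nat) : R :=
  match n with O => 0 | Datatypes.S k => psum f k + f k end.

Lemma psum_sum f n : psum f (Datatypes.S n) = sum_f_R0 f n.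
Proof. induction n; simpl in *. ring. rewrite <- IHn. simpl. reflexivity. Qed.

Lemma psum_mono f n m : (forall j, 0 <= f j) -> (n <= m)%nat -> psum f n <= psum f m.
Proof.
  intros Hf Hnm. induction Hnm. lra. simpl. specialize (Hf m). lra.
Qed.

Lemma T_pos (lam : nat -> R) s n : (forall j, 0 < lam j) -> infinite_sum lam s ->
  0 < s - psum lam n.
Proof.
  intros Hl Hs. destruct (Rlt_le_dec (psum lam n) s) as [h|h]. lra. exfalso.
  assert (Hl' : forall j, 0 <= lam j) by (intro j; specialize (Hl j); lra).
  set (e := psum lam (Datatypes.S n) - s).
  assert (e > 0) by (unfold e; simpl; specialize (Hl n); lra).
  destruct (Hs e H) as [N HN].
  specialize (HN (max N n) (Nat.le_max_l _ _)).
  rewrite <- psum_sum in HN. unfold R_dist in HN.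
  assert (psum lam (Datatypes.S n) <= psum lam (Datatypes.S (max N n))).
  { apply psum_mono; auto. apply le_n_S, Nat.le_max_r. }
  assert (Hp : lam n > 0) by apply Hl. simpl psum in *. unfold e in *. rewrite Rabs_right in HN by lra. lra.
Qed.

Lemma T_lim (lam : nat -> R) s : infinite_sum lam s ->
  forall eps, eps > 0 -> exists N, forall n, (n >= N)%nat -> s - psum lam n < eps.
Proof.
  intros Hs eps He. destruct (Hs eps He) as [N HN]. exists (Datatypes.S N). intros n Hn.
  destruct n as [|n]. lia. rewrite psum_sum. specialize (HN n ltac:(lia)).
  unfold R_dist in HN. pose proof (Rle_abs (s - sum_f_R0 lam n)).
  rewrite Rabs_minus_sym in H. lra.
Qed.

Lemma wconv (w d T sig : nat -> R) :
  (forall n, 0 < T n) -> (forall n, 0 <= w n) -> (forall n, 0 <= d n) ->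
  (forall n, sig n * sqrt (T n) = sqrt (T (Datatypes.S n))) -> (forall n, 0 <= sig n <= 1) ->
  (forall n, w (Datatypes.S n) <= sig n * w n + 2 * d n) ->
  (forall eps, eps > 0 -> exists N, forall n, (n >= N)%nat -> T n < eps) ->
  (forall eps, eps > 0 -> exists N, forall n, (n >= N)%nat -> psum d n - psum d N < eps) ->
  forall eps, eps > 0 -> exists N, forall n, (n >= N)%nat -> w n < eps.
Proof.
  intros HT Hw Hd Hsig Hs01 Hrec HTl HD eps He.
  assert (unroll : forall N k, w (N + k)%nat <=
     sqrt (T (N + k)%nat) / sqrt (T N) * w N + 2 * (psum d (N + k) - psum d N)).
  { intros N k. assert (0 < sqrt (T N)) by (apply sqrt_lt_R0, HT).
    induction k.
    - rewrite Nat.add_0_r. replace (sqrt (T N) / sqrt (T N)) with 1 by (field; lra). lra.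
    - replace (N + Datatypes.S k)%nat with (Datatypes.S (N + k)) by lia.
      simpl psum. rewrite <- Hsig.
      specialize (Hrec (N + k)%nat). specialize (Hs01 (N + k)%nat).
      assert (psum d N <= psum d (N + k)) by (apply psum_mono; auto; lia).
      assert (0 <= w N) by auto. specialize (Hd (N+k)%nat).
      assert (sig (N + k)%nat * w (N + k)%nat <= sig (N + k)%nat *
        (sqrt (T (N + k)%nat) / sqrt (T N) * w N + 2 * (psum d (N + k) - psum d N)))
        by (apply Rmult_le_compat_l; lra).
      assert (sig (N + k)%nat * (2 * (psum d (N + k) - psum d N)) <=
        2 * (psum d (N + k) - psum d N)) by nra.
      replace (sig (N + k)%nat * sqrt (T (N + k)%nat) / sqrt (T N) * w N) with
        (sig (N + k)%nat * (sqrt (T (N + k)%nat) / sqrt (T N) * w N)) by (field; lra).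
      lra. }
  destruct (HD (eps/4) ltac:(lra)) as [N HN].
  assert (0 < sqrt (T N)) by (apply sqrt_lt_R0, HT).
  set (c := w N / sqrt (T N)).
  assert (0 <= c) by (unfold c; apply Rmult_le_pos; [auto|left; apply Rinv_0_lt_compat; lra]).
  set (a := eps / (2 * (c + 1))).
  assert (0 < a) by (unfold a; apply Rdiv_lt_0_compat; lra).
  destruct (HTl (a * a) ltac:(nra)) as [M HM].
  exists (max N M). intros n Hn.
  specialize (unroll N (n - N)%nat). replace (N + (n - N))%nat with n in unroll by lia.
  specialize (HN n ltac:(lia)). specialize (HM n ltac:(lia)).
  assert (sqrt (T n) < a).
  { rewrite <- (sqrt_square a) by lra. apply sqrt_lt_1_alt. split. left; apply HT. exact HM. }
  assert (sqrt (T n) * c <= a * c) by (apply Rmult_le_compat_r; lra).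
  assert (a * c < eps / 2).
  { unfold a. apply Rmult_lt_reg_r with (2 * (c + 1)). lra.
    replace (eps / (2 * (c + 1)) * c * (2 * (c + 1))) with (eps * c) by (field; lra). nra. }
  replace (sqrt (T n) / sqrt (T N) * w N) with (sqrt (T n) * c) in unroll by (unfold c; field; lra).
  lra.
Qed.

Definition Tf (lam : nat -> R) (s : R) n := s - psum lam n.
Definition sigf lam s n := sqrt (Tf lam s (Datatypes.S n) / Tf lam s n).
Definition gamf lam s n := sqrt (lam n / Tf lam s n).

Definition omega (c : Defs.C) : Defs.C :=
  let m := Re c * Re c + Im c * Im c in
  match Rlt_dec 0 m with
  | left _ => mkC (- Im c / sqrt m) (Re c / sqrt m)
  | right _ => Defs.C1
  end.

Lemma om_norm c : Re (omega c) * Re (omega c) + Im (omega c) * Im (omega c) = 1.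
Proof.
  unfold omega. destruct (Rlt_dec _ _) as [h|h]; simpl; [|ring].
  set (m := Re c * Re c + Im c * Im c) in *.
  pose proof (sqrt_lt_R0 _ h). pose proof (sqrt_sqrt m ltac:(lra)).
  assert (E : - Im c / sqrt m * (- Im c / sqrt m) + Re c / sqrt m * (Re c / sqrt m)
    = (Re c * Re c + Im c * Im c) / (sqrt m * sqrt m)) by (field; lra).
  rewrite E. fold m. rewrite H0. field. lra.
Qed.

Lemma om_orth c : Re (Cmul (Cconj (omega c)) c) = 0.
Proof.
  unfold omega. destruct (Rlt_dec _ _) as [h|h]; simpl.
  - set (m := Re c * Re c + Im c * Im c) in *.
    pose proof (sqrt_lt_R0 _ h). field. lra.
  - assert (Re c = 0 /\ Im c = 0) as [h1 h2] by (split; nra). rewrite h1, h2. ring.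
Qed.

Definition yf {H : SepHilbert} (u : nat -> H) (b : H) n : H :=
  omega (inner H b (u (Datatypes.S n))) *v u (Datatypes.S n).

Fixpoint bseq {H : SepHilbert} lam s (u : nat -> H) n : H :=
  match n with
  | O => RtoC (sqrt (1 - s)) *v u O
  | Datatypes.S k => let b := bseq lam s u k in
      RtoC (- sigf lam s k) *v b +v RtoC (gamf lam s k) *v yf u b k
  end.

Definition aseq {H : SepHilbert} lam s (u : nat -> H) n : H :=
  let b := bseq lam s u n in RtoC (gamf lam s n) *v b +v RtoC (sigf lam s n) *v yf u b n.

Definition rr {H : SepHilbert} (x v : H) : H := inner H x v *v v.

Lemma Nu {H : SepHilbert} (v : H) : hnorm H v = 1 -> N v = 1.
Proof.
  intro E. unfold hnorm in E. fold (N v) in E.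
  rewrite <- (sqrt_sqrt (N v)) by apply N_ge0. rewrite E. ring.
Qed.

Lemma Ny {H : SepHilbert} (u : nat -> H) b n : hnorm H (u (Datatypes.S n)) = 1 -> N (yf u b n) = 1.
Proof. intro E. unfold yf. rewrite Nscal, om_norm, Nu by exact E. ring. Qed.

Lemma orth {H : SepHilbert} (u : nat -> H) b n : Re (inner H b (yf u b n)) = 0.
Proof. unfold yf. rewrite inner_scal_r. apply om_orth. Qed.


Lemma Tf_S lam s n : Tf lam s (Datatypes.S n) = Tf lam s n - lam n.
Proof. unfold Tf. simpl. ring. Qed.

Lemma Tf_pos lam s n : (forall j, 0 < lam j) -> infinite_sum lam s -> 0 < Tf lam s n.
Proof. intros; apply T_pos; auto. Qed.

Lemma sig2 lam s n : (forall j, 0 < lam j) -> infinite_sum lam s ->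
  sigf lam s n * sigf lam s n = Tf lam s (Datatypes.S n) / Tf lam s n.
Proof.
  intros hl hs. unfold sigf. apply sqrt_sqrt.
  pose proof (Tf_pos lam s n hl hs); pose proof (Tf_pos lam s (Datatypes.S n) hl hs).
  apply Rmult_le_pos; [lra| left; apply Rinv_0_lt_compat; lra].
Qed.

Lemma gam2 lam s n : (forall j, 0 < lam j) -> infinite_sum lam s ->
  gamf lam s n * gamf lam s n = lam n / Tf lam s n.
Proof.
  intros hl hs. unfold gamf. apply sqrt_sqrt.
  pose proof (Tf_pos lam s n hl hs); pose proof (hl n).
  apply Rmult_le_pos; [lra| left; apply Rinv_0_lt_compat; lra].
Qed.

Lemma sg1 lam s n : (forall j, 0 < lam j) -> infinite_sum lam s ->
  sigf lam s n * sigf lam s n + gamf lam s n * gamf lam s n = 1.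
Proof.
  intros hl hs. rewrite sig2, gam2, Tf_S by auto.
  pose proof (Tf_pos lam s n hl hs). field. lra.
Qed.

Lemma sig_le1 lam s n : (forall j, 0 < lam j) -> infinite_sum lam s ->
  0 <= sigf lam s n <= 1.
Proof.
  intros hl hs. pose proof (sg1 lam s n hl hs). split. apply sqrt_pos.
  pose proof (sqrt_pos (lam n / Tf lam s n)). fold (gamf lam s n) in H0.
  pose proof (sqrt_pos (Tf lam s (Datatypes.S n) / Tf lam s n)). fold (sigf lam s n) in H1.
  nra.
Qed.

Lemma sig_sqrt lam s n : (forall j, 0 < lam j) -> infinite_sum lam s ->
  sigf lam s n * sqrt (Tf lam s n) = sqrt (Tf lam s (Datatypes.S n)).
Proof.
  intros hl hs. pose proof (Tf_pos lam s n hl hs); pose proof (Tf_pos lam s (Datatypes.S n) hl hs).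
  unfold sigf. rewrite <- sqrt_mult_alt.
  - f_equal. field. lra.
  - apply Rmult_le_pos; [lra| left; apply Rinv_0_lt_compat; lra].
Qed.

Lemma Nb {H : SepHilbert} lam s (u : nat -> H) n :
  (forall j, 0 < lam j) -> infinite_sum lam s -> s < 1 -> (forall j, hnorm H (u j) = 1) ->
  N (bseq lam s u n) = 1 - Tf lam s n.
Proof.
  intros hl hs hs1 hu. induction n.
  - simpl. rewrite Nscal, (Nu _ (hu O)). simpl. rewrite sqrt_sqrt by lra. unfold Tf. simpl. ring.
  - cbn [bseq]. rewrite Ncomb, IHn, (Ny u _ n (hu _)), orth.
    pose proof (sig2 lam s n hl hs). pose proof (gam2 lam s n hl hs).
    pose proof (Tf_pos lam s n hl hs). rewrite Tf_S in *.
    replace (- sigf lam s n * - sigf lam s n) with (sigf lam s n * sigf lam s n) by ring.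
    rewrite H0, H1. field. lra.
Qed.

Lemma Na {H : SepHilbert} lam s (u : nat -> H) n :
  (forall j, 0 < lam j) -> infinite_sum lam s -> s < 1 -> (forall j, hnorm H (u j) = 1) ->
  N (aseq lam s u n) = 1 - lam n.
Proof.
  intros hl hs hs1 hu. unfold aseq. rewrite Ncomb, Nb, (Ny u _ n (hu _)), orth by auto.
  pose proof (sig2 lam s n hl hs). pose proof (gam2 lam s n hl hs).
  pose proof (Tf_pos lam s n hl hs). rewrite Tf_S in *.
  rewrite H0, H1. field. lra.
Qed.

Lemma lin_scal {H : SepHilbert} (a p q : Defs.C) (b y : H) :
  a *v (p *v b +v q *v y) = Cmul a p *v b +v Cmul a q *v y.
Proof. rewrite hscal_distr_v, !hscal_assoc. reflexivity. Qed.

Lemma lin_add {H : SepHilbert} (A B C' D : Defs.C) (b y : H) :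
  (A *v b +v B *v y) +v (C' *v b +v D *v y) = Cadd A C' *v b +v Cadd B D *v y.
Proof.
  rewrite !hscal_distr_s. rewrite <- !hadd_assoc. f_equal.
  rewrite !hadd_assoc. f_equal. apply hadd_comm.
Qed.

Lemma inner_lin {H : SepHilbert} (x b y : H) p q :
  inner H x (p *v b +v q *v y) = Cadd (Cmul (Cconj p) (inner H x b)) (Cmul (Cconj q) (inner H x y)).
Proof. rewrite inner_add_r, !inner_scal_r. reflexivity. Qed.

Lemma rot_id {H : SepHilbert} (x b y : H) g t : g * g + t * t = 1 ->
  rr x (RtoC g *v b +v RtoC t *v y) +v rr x (RtoC (- t) *v b +v RtoC g *v y) = rr x b +v rr x y.
Proof.
  intro E. unfold rr. rewrite !inner_lin, !lin_scal, lin_add.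
  assert (Hb : forall c : Defs.C, c *v b = c *v b) by reflexivity.
  f_equal; f_equal; destruct (inner H x b) as [b1 b2], (inner H x y) as [y1 y2]; Cext.
  - transitivity ((g*g+t*t)*b1); [ring| rewrite E; ring].
  - transitivity ((g*g+t*t)*b2); [ring| rewrite E; ring].
  - transitivity ((g*g+t*t)*y1); [ring| rewrite E; ring].
  - transitivity ((g*g+t*t)*y2); [ring| rewrite E; ring].
Qed.

Lemma ry {H : SepHilbert} (u : nat -> H) (x b : H) n :
  rr x (yf u b n) = rank1 H (u (Datatypes.S n)) (u (Datatypes.S n)) x.
Proof.
  unfold rr, yf, rank1. rewrite inner_scal_r, hscal_assoc. f_equal.
  pose proof (om_norm (inner H b (u (Datatypes.S n)))).
  destruct (omega _) as [o1 o2], (inner H x _) as [c1 c2]; simpl in *; Cext.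
  - transitivity ((o1*o1+o2*o2)*c1); [ring| rewrite H0; ring].
  - transitivity ((o1*o1+o2*o2)*c2); [ring| rewrite H0; ring].
Qed.

Lemma step_id {H : SepHilbert} lam s (u : nat -> H) (x : H) n :
  (forall j, 0 < lam j) -> infinite_sum lam s ->
  rr x (aseq lam s u n) +v rr x (bseq lam s u (Datatypes.S n)) =
  rr x (bseq lam s u n) +v rank1 H (u (Datatypes.S n)) (u (Datatypes.S n)) x.
Proof.
  intros hl hs. cbn [bseq]. unfold aseq. rewrite <- (ry u x (bseq lam s u n) n).
  apply rot_id. rewrite Rplus_comm. apply sg1; auto.
Qed.

Lemma ident {H : SepHilbert} lam s (u : nat -> H) (x : H) n :
  (forall j, 0 < lam j) -> infinite_sum lam s ->
  vsum H (fun j => rr x (aseq lam s u j)) n +v rr x (bseq lam s u n) =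
  rr x (bseq lam s u O) +v vsum H (fun j => rank1 H (u (Datatypes.S j)) (u (Datatypes.S j)) x) n.
Proof.
  intros hl hs. induction n.
  - simpl. rewrite hadd_0_l, hadd_0. reflexivity.
  - change (vsum H (fun j => rr x (aseq lam s u j)) n +v rr x (aseq lam s u n)
       +v rr x (bseq lam s u (Datatypes.S n)) =
       rr x (bseq lam s u O) +v (vsum H (fun j => rank1 H (u (Datatypes.S j)) (u (Datatypes.S j)) x) n
       +v rank1 H (u (Datatypes.S n)) (u (Datatypes.S n)) x)).
    rewrite <- hadd_assoc, step_id by auto.
    rewrite hadd_assoc, IHn, <- hadd_assoc. reflexivity.
Qed.

Lemma rb0 {H : SepHilbert} s (u : nat -> H) (x : H) : s < 1 ->
  rr x (RtoC (sqrt (1 - s)) *v u O) = RtoC (1 - s) *v rank1 H (u O) (u O) x.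
Proof.
  intro hs. unfold rr, rank1. rewrite inner_scal_r, !hscal_assoc. f_equal.
  pose proof (sqrt_sqrt (1 - s) ltac:(lra)).
  destruct (inner H x (u O)) as [c1 c2]; Cext.
  - transitivity (sqrt (1-s) * sqrt (1-s) * c1); [ring| rewrite H0; ring].
  - transitivity (sqrt (1-s) * sqrt (1-s) * c2); [ring| rewrite H0; ring].
Qed.

Lemma key_ineq t g z e : 0 <= t <= 1 -> 0 <= g -> t * t + g * g = 1 ->
  (- t * z + g * e) * (- t * z + g * e) <= t * (z * z) + 2 * (e * e).
Proof.
  intros Ht Hg E.
  assert (Q : 0 <= (1 - t) * (z * z) + (1 + t) * (e * e) + 2 * g * z * e).
  { destruct (Req_dec t 1) as [h|h].
    - subst. assert (g = 0) by nra. subst. nra.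
    - assert (0 < 1 - t) by lra.
      apply Rmult_le_reg_l with (1 - t); [lra|].
      assert (Id : (1 - t) * ((1 - t) * (z * z) + (1 + t) * (e * e) + 2 * g * z * e)
        = ((1 - t) * z + g * e) * ((1 - t) * z + g * e) + (1 - (t*t + g*g))*(e*e)) by ring.
      rewrite Id, E. rewrite Rmult_0_r, Rminus_diag, Rmult_0_l, Rplus_0_r.
      apply Rle_0_sqr. }
  assert (t * ((1 - t) * (z * z) + (1 + t) * (e * e) + 2 * g * z * e) >= 0) by nra.
  assert (e * e >= 0) by nra.
  transitivity (t * (z * z) + (1 + t) * (e * e)); [|nra].
  replace ((- t * z + g * e) * (- t * z + g * e)) with
    (t*t*(z*z) + g*g*(e*e) - 2*t*g*z*e) by ring.
  replace (g * g) with (1 - t * t) by lra. nra.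
Qed.

Definition cabs2 (c : Defs.C) := Re c * Re c + Im c * Im c.

Lemma wrec {H : SepHilbert} lam s (u : nat -> H) (x : H) n :
  (forall j, 0 < lam j) -> infinite_sum lam s ->
  cabs2 (inner H x (bseq lam s u (Datatypes.S n))) <=
  sigf lam s n * cabs2 (inner H x (bseq lam s u n)) + 2 * cabs2 (inner H x (u (Datatypes.S n))).
Proof.
  intros hl hs. cbn [bseq]. rewrite inner_lin. unfold yf. rewrite inner_scal_r.
  pose proof (sig_le1 lam s n hl hs). pose proof (sqrt_pos (lam n / Tf lam s n)).
  fold (gamf lam s n) in H1. pose proof (sg1 lam s n hl hs).
  pose proof (om_norm (inner H (bseq lam s u n) (u (Datatypes.S n)))).
  unfold cabs2.
  destruct (omega _) as [o1 o2]; destruct (inner H x (bseq lam s u n)) as [z1 z2];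
  destruct (inner H x (u (Datatypes.S n))) as [c1 c2]; simpl in *.
  set (t := sigf lam s n) in *. set (g := gamf lam s n) in *.
  pose proof (key_ineq t g z1 (o1 * c1 - - o2 * c2) H0 H1 H2).
  pose proof (key_ineq t g z2 (o1 * c2 + - o2 * c1) H0 H1 H2).
  assert (Ee : (o1 * c1 - - o2 * c2) * (o1 * c1 - - o2 * c2) + (o1 * c2 + - o2 * c1) * (o1 * c2 + - o2 * c1)
     = c1 * c1 + c2 * c2).
  { transitivity ((o1 * o1 + o2 * o2) * (c1 * c1 + c2 * c2)); [ring| rewrite H3; ring]. }
  replace ((- t * z1 - - 0 * z2 + (g * (o1 * c1 - - o2 * c2) - - 0 * (o1 * c2 + - o2 * c1))))
    with (- t * z1 + g * (o1 * c1 - - o2 * c2)) by ring.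
  replace ((- t * z2 + - 0 * z1 + (g * (o1 * c2 + - o2 * c1) + - 0 * (o1 * c1 - - o2 * c2))))
    with (- t * z2 + g * (o1 * c2 + - o2 * c1)) by ring.
  nra.
Qed.

Lemma dsum {H : SepHilbert} (u : nat -> H) (x : H) n :
  Re (inner H (vsum H (fun j => rank1 H (u (Datatypes.S j)) (u (Datatypes.S j)) x) n) x) =
  psum (fun j => cabs2 (inner H x (u (Datatypes.S j)))) n.
Proof.
  induction n.
  - simpl. rewrite <- (hscal_0 (hzero H)), inner_scal_l. simpl. ring.
  - simpl vsum. simpl psum. rewrite inner_add_l. simpl Re at 1. rewrite IHn. f_equal.
    unfold rank1. rewrite inner_scal_l, (inner_conj x (u (Datatypes.S n))).
    unfold cabs2. destruct (inner H x _); simpl. ring.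
Qed.

Lemma dcauchy {H : SepHilbert} (u : nat -> H) (x L : H) :
  vconv H (fun n => vsum H (fun j => rank1 H (u (Datatypes.S j)) (u (Datatypes.S j)) x) n) L ->
  forall eps, eps > 0 -> exists N, forall n, (n >= N)%nat ->
    psum (fun j => cabs2 (inner H x (u (Datatypes.S j)))) n -
    psum (fun j => cabs2 (inner H x (u (Datatypes.S j)))) N < eps.
Proof.
  intros hv eps He.
  pose proof (sqrt_pos (N x)) as Hx.
  destruct (hv (eps / 2 / (sqrt (N x) + 1))) as [M HM].
  { apply Rdiv_lt_0_compat; lra. }
  assert (close : forall n, (n >= M)%nat ->
    Rabs (psum (fun j => cabs2 (inner H x (u (Datatypes.S j)))) n - Re (inner H L x)) < eps / 2).
  { intros n Hn. rewrite <- dsum, <- Re_inner_sub.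
    eapply Rle_lt_trans. apply sqrt_CS.
    specialize (HM n Hn). unfold hnorm in HM. fold (N (hsub H
      (vsum H (fun j => rank1 H (u (Datatypes.S j)) (u (Datatypes.S j)) x) n) L)) in HM.
    set (a := sqrt (N (hsub H _ _))) in *.
    assert (0 <= a) by apply sqrt_pos.
    apply Rle_lt_trans with (eps / 2 / (sqrt (N x) + 1) * sqrt (N x)).
    - apply Rmult_le_compat_r; lra.
    - apply Rmult_lt_reg_r with (sqrt (N x) + 1). lra.
      replace (eps / 2 / (sqrt (N x) + 1) * sqrt (N x) * (sqrt (N x) + 1)) with
        (eps / 2 * sqrt (N x)) by (field; lra). nra. }
  exists M. intros n Hn.
  pose proof (close n Hn). pose proof (close M (le_n M)).
  pose proof (Rle_abs (psum (fun j => cabs2 (inner H x (u (Datatypes.S j)))) n - Re (inner H L x))).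
  pose proof (Rle_abs (- (psum (fun j => cabs2 (inner H x (u (Datatypes.S j)))) M - Re (inner H L x)))).
  rewrite Rabs_Ropp in H3. lra.
Qed.

Definition Pj {H : SepHilbert} lam s (u : nat -> H) j (z : H) : H :=
  Cmul (RtoC (/ (1 - lam j))) (inner H z (aseq lam s u j)) *v aseq lam s u j.

Lemma inner_aa {H : SepHilbert} lam s (u : nat -> H) j :
  (forall j, 0 < lam j) -> infinite_sum lam s -> s < 1 -> (forall j, hnorm H (u j) = 1) ->
  inner H (aseq lam s u j) (aseq lam s u j) = RtoC (1 - lam j).
Proof.
  intros. pose proof (Na lam s u j H0 H1 H2 H3) as E. unfold N in E.
  pose proof (inner_self_Im (aseq lam s u j)).
  destruct (inner H _ _); simpl in *; Cext; auto.
Qed.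

Lemma Pj_proj {H : SepHilbert} lam s (u : nat -> H) j :
  (forall j, 0 < lam j < 1/2) -> infinite_sum lam s -> s < 1 -> (forall j, hnorm H (u j) = 1) ->
  rank1_proj H (Pj lam s u j).
Proof.
  intros hl hs hs1 hu.
  assert (hl' : forall j, 0 < lam j) by (intro i; apply hl).
  pose proof (inner_aa lam s u j hl' hs hs1 hu) as Eaa.
  assert (hm : 1 - lam j <> 0) by (specialize (hl j); lra).
  set (a := aseq lam s u j) in *. unfold rank1_proj, Pj. fold a.
  split; [|split].
  - intros x y. rewrite inner_scal_l, inner_scal_r, (inner_conj a y).
    destruct (inner H x a), (inner H a y); Cext; ring.
  - intro x. rewrite inner_scal_l, Eaa. f_equal.
    destruct (inner H x a); Cext; field; auto.
  - exists a. split; [|split].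
    + intro E. rewrite E in Eaa. rewrite <- (hscal_0 (hzero H)), inner_scal_l in Eaa.
      apply (f_equal Re) in Eaa. simpl in Eaa. lra.
    + rewrite Eaa. rewrite <- (hscal_1 a) at 2. f_equal. Cext; field; auto.
    + intro x. eexists. reflexivity.
Qed.

Lemma Pj_term {H : SepHilbert} lam s (u : nat -> H) j (x : H) :
  1 - lam j <> 0 ->
  RtoC (1 - lam j) *v Pj lam s u j x = rr x (aseq lam s u j).
Proof.
  intro hm. unfold Pj, rr. rewrite hscal_assoc. f_equal.
  destruct (inner H x _); Cext; field; auto.
Qed.

Lemma vsum_ext {H : SepHilbert} (f g : nat -> H) n : (forall j, f j = g j) -> vsum H f n = vsum H g n.
Proof. intro E. induction n; simpl; [reflexivity| rewrite IHn, E; reflexivity]. Qed.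

Theorem lemma3p12 (H : SepHilbert) (lam : nat -> R) (u : nat -> H) (s : R) (Bt : H -> H)
  (hlam : forall j, 0 < lam j < 1/2)
  (hsum : infinite_sum lam s) (hs : s < 1)
  (hu : forall j, hnorm H (u j) = 1)
  (hS : sot_sum H (fun j => rank1 H (u (Datatypes.S j)) (u (Datatypes.S j))) Bt) :
  Adm H (fun x => hadd H (hscal H (RtoC (1 - s)) (rank1 H (u 0%nat) (u 0%nat) x)) (Bt x))
        (fun j => 1 - lam j).
Proof.
  assert (hl : forall j, 0 < lam j) by (intro j; apply hlam).
  split; [intro j; specialize (hlam j); lra|].
  split; [exists 1; intro j; specialize (hlam j); lra|].
  exists (Pj lam s u). split; [intro j; apply Pj_proj; auto|].
  intros x eps He.
  destruct (hS x (eps / 2) ltac:(lra)) as [N1 HN1].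
  assert (Hw := wconv (fun n => cabs2 (inner H x (bseq lam s u n)))
                 (fun j => cabs2 (inner H x (u (Datatypes.S j)))) (Tf lam s) (sigf lam s)).
  destruct (Hw (fun n => Tf_pos lam s n hl hsum)
    ltac:(intro n; unfold cabs2; nra) ltac:(intro n; unfold cabs2; nra)
    (fun n => sig_sqrt lam s n hl hsum) (fun n => sig_le1 lam s n hl hsum)
    (fun n => wrec lam s u x n hl hsum) (T_lim lam s hsum)
    (dcauchy u x (Bt x) (hS x)) ((eps / 2) * (eps / 2)) ltac:(nra)) as [N2 HN2].
  exists (max N1 N2). intros n Hn.
  specialize (HN1 n ltac:(lia)). specialize (HN2 n ltac:(lia)). simpl in HN1, HN2.
  rewrite (vsum_ext _ (fun j => rr x (aseq lam s u j))).
  2:{ intro j. apply Pj_term. specialize (hlam j); lra. }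
  rewrite <- (rb0 s u x hs).
  change (rr x (RtoC (sqrt (1 - s)) *v u 0%nat)) with (rr x (bseq lam s u 0)).
  rewrite (rearr _ _ _ _ _ (ident lam s u x n hl hsum)).
  eapply Rle_lt_trans; [apply tri|]. rewrite hnorm_opp.
  assert (hnorm H (rr x (bseq lam s u n)) < eps / 2).
  { unfold rr. rewrite hnorm_scal, (Nb lam s u n hl hsum hs hu).
    pose proof (Tf_pos lam s n hl hsum).
    set (w := Re (inner H x (bseq lam s u n)) * Re (inner H x (bseq lam s u n)) +
              Im (inner H x (bseq lam s u n)) * Im (inner H x (bseq lam s u n))) in *.
    assert (0 <= w) by (unfold w; nra).
    apply Rle_lt_trans with (sqrt w).
    - apply sqrt_le_1_alt. nra.
    - rewrite <- (sqrt_square (eps / 2)) by lra. apply sqrt_lt_1_alt. split; auto. }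
  simpl in HN1. lra.
Qed.
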